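(* Assume (A0)–(A3) and let $\{(x^k,\lambda^k)\}$ be generated by the NEPJ-ADMM. Then for every $k\ge1$, $$\hat{\mathcal{L}}_k-\hat{\mathcal{L}}_{k-1}\le\sum_{i=1}^{p-1}\Big(\frac{(p-2+\alpha)\beta\|A_i\|^2}{2}-\frac{m_i}{4}\Big)\|\Delta x_i^k\|^2+\Theta_\lambda^k+\Theta_p^k,$$ where $\Theta_\lambda^k:=\frac{1}{\beta\theta}\|\Delta\lambda^k\|^2+\frac{c_1}{2}\big(\|A_p^*\Delta\lambda^k\|^2-\|A_p^*\Delta\lambda^{k-1}\|^2\big)$ and $\Theta_p^k:=\Big(\frac{(p-1)\beta\|A_p\|^2}{2\alpha}-\frac{m_p}{4}\Big)\big(\|\Delta x_p^k\|^2+\|\Delta x_p^{k-1}\|^2\big)$.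
   Context: Problem: let $p\ge2$, $f_i:\mathbb{R}^{n_i}\to(-\infty,\infty]$ ($i=1,\dots,p$), $A_i\in\mathbb{R}^{d\times n_i}$, $b\in\mathbb{R}^d$, and consider $\min\{\sum_{i=1}^pf_i(x_i):\sum_{i=1}^pA_ix_i=b\}$. For $\beta>0$ the augmented Lagrangian is $\mathcal{L}_\beta(x_1,\dots,x_p,\lambda)=\sum_{i=1}^pf_i(x_i)-\langle\lambda,\sum_{i=1}^pA_ix_i-b\rangle+\frac\beta2\|\sum_{i=1}^pA_ix_i-b\|^2$. Standing assumptions: (A0) $f_1,\dots,f_{p-1}$ are proper lower semicontinuous; (A1) $A_p\ne0$ and $\mathrm{Im}(A_p)\supseteq\{b\}\cup\mathrm{Im}(A_1)\cup\dots\cup\mathrm{Im}(A_{p-1})$; (A2) $f_p:\mathbb{R}^{n_p}\to\mathbb{R}$ is differentiable with $L_p$-Lipschitz gradient; (A3) there is $\bar\beta\ge0$ with $v(\bar\beta)>-\infty$, where $v(\beta):=\inf_{x}\{\sum_{i=1}^pf_i(x_i)+\frac\beta2\|\sum_{i=1}^pA_ix_i-b\|^2\}$. $A^*$ is the transpose; $\sigma^+_{A_p}$ is the smallest positive eigenvalue of $A_p^*A_p$. Distance generating functions: for $Z\subseteq\mathbb{R}^s$ and $0<m\le M$, $\mathcal{D}_Z(m,M)$ is the class of real-valued functions $w$ differentiable on $Z$ with $w(z')-w(z)-\langle\nabla w(z),z'-z\rangle\ge\frac m2\|z'-z\|^2$ and $\|\nabla w(z)-\nabla w(z')\|\le M\|z-z'\|$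 for all $z,z'\in Z$; its Bregman distance is $(dw)_z(z'):=w(z')-w(z)-\langle\nabla w(z),z'-z\rangle$ for $z\in Z$, $z'\in\mathbb{R}^s$. NEPJ-ADMM: let $Z_i=\mathrm{dom} f_i$, $\gamma_\theta:=\theta/(1-|\theta-1|)^2$. Pick $(x_1^0,\dots,x_p^0,\lambda^0)\in Z_1\times\dots\times Z_p\times\mathbb{R}^d$, $\alpha>0$, $\beta\ge\bar\beta$ with $\beta>0$, $M_i\ge m_i>0$, $\theta\in(0,2)$ such that $\delta_i:=\frac{m_i}{4}-\big(\frac{p-2+\alpha}{2}+\frac{2\gamma_\theta(p+1)}{\sigma^+_{A_p}}\|A_p^*\|^2\big)\beta\max_{1\le l\le p-1}\|A_l\|^2>0$ for $i=1,\dots,p-1$ and $\delta_p:=\frac{m_p}{4}-\big(\frac{\beta(p-1)\|A_p\|^2}{2\alpha}+\frac{\gamma_\theta(p+1)(L_p^2+2M_p^2)}{\beta\sigma^+_{A_p}}\big)>0$. For $k\ge1$: for each $i$ choose $w_i^k\in\mathcal{D}_{Z_i}(m_i,M_i)$ and let $x_i^k$ be an optimal solution (assumed to exist) of $\min_{x_i}\{\mathcal{L}_\beta(x^{k-1}_{<i},x_i,x^{k-1}_{>i},\lambda^{k-1})+(dw_i^k)_{x_i^{k-1}}(x_i)\}$, where $(x_{<i},x_i,x_{>i})$ denotes $(x_1,\dots,x_p)$ with the $i$-th block singled out; then set $\lambda^k=\lambda^{k-1}-\theta\beta(\sum_{i=1}^pA_ix_i^k-b)$. Write $x^k=(x_1^k,\dots,x_p^k)$.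 Notation: $\Delta x_i^k:=x_i^k-x_i^{k-1}$, $\Delta\lambda^k:=\lambda^k-\lambda^{k-1}$ for $k\ge1$; $R_p^0:=A_p^*\lambda^0-\nabla f_p(x_p^0)$; conventions $\Delta\lambda^0:=0$, $\Delta x_i^0:=0$ for $i=1,\dots,p-1$, $\Delta x_p^0:=R_p^0/M_p$. Let $c_1:=\frac{2|\theta-1|}{\beta\theta(1-|\theta-1|)\sigma^+_{A_p}}$, $\eta_0:=\frac{m_p}{4M_p^2}\|A_p^*\lambda^0-\nabla f_p(x_p^0)\|^2$, $\eta_k:=\sum_{i=1}^p\frac{m_i}{4}\|\Delta x_i^k\|^2+\frac{c_1}{2}\|A_p^*\Delta\lambda^k\|^2$ for $k\ge1$, and $\hat{\mathcal{L}}_k:=\mathcal{L}_\beta(x^k,\lambda^k)+\eta_k$ for $k\ge0$. *)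

(* Defs.v *)
From Stdlib Require Import Reals Lra Lia.
Open Scope R_scope.

(* A vector of R^n is represented by a function nat -> R of which only the
   coordinates 0..n-1 are meaningful; all notions below only read those. *)
Definition vec := nat -> R.
(* A d x n matrix: entry (r, c) with r < d, c < n. *)
Definition mat := nat -> nat -> R.

Fixpoint sumR (n : nat) (f : nat -> R) : R :=
  match n with O => 0 | S m => sumR m f + f m end.

(* sum_{i=1}^{k} g i (block sums, blocks indexed 1..p) *)
Fixpoint sum1 (k : nat) (g : nat -> R) : R :=
  match k with O => 0 | S k' => sum1 k' g + g (S k') end.

(* max_{1<=l<=k} g l (for k >= 1 and g >= 0; base value 0) *)
Fixpoint max1 (k : nat) (g : nat -> R) : R :=
  match k with O => 0 | S k' => Rmax (max1 k' g) (g (S k')) end.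

Definition inner (n : nat) (u v : vec) : R := sumR n (fun j => u j * v j).
Definition norm (n : nat) (u : vec) : R := sqrt (inner n u u).
Definition vadd (u v : vec) : vec := fun j => u j + v j.
Definition vsub (u v : vec) : vec := fun j => u j - v j.
Definition vscal (a : R) (u : vec) : vec := fun j => a * u j.
Definition vzero : vec := fun _ => 0.
Definition veq (n : nat) (u v : vec) : Prop := forall j, (j < n)%nat -> u j = v j.

Definition mapply (n : nat) (A : mat) (x : vec) : vec :=
  fun r => sumR n (fun c => A r c * x c).
Definition transpose (A : mat) : mat := fun c r => A r c.
Definition mtapply (d : nat) (A : mat) (y : vec) : vec := mapply d (transpose A) y.
Definition mtm (d : nat) (A : mat) : mat := fun c c' => sumR d (fun r => A r c * A r c').

Definition is_opnorm (m n : nat) (A : mat) (a : R) : Prop :=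
  is_lub (fun r => exists x, norm n x <= 1 /\ r = norm m (mapply n A x)) a.

Definition is_min_pos_eig (n : nat) (S : mat) (s : R) : Prop :=
  0 < s /\
  (exists v, ~ veq n v vzero /\ veq n (mapply n S v) (vscal s v)) /\
  (forall mu v, 0 < mu -> ~ veq n v vzero -> veq n (mapply n S v) (vscal mu v) -> s <= mu).

Inductive ERbar : Type := Fin (r : R) | PInf.

Definition ERadd (a b : ERbar) : ERbar :=
  match a, b with Fin x, Fin y => Fin (x + y) | _, _ => PInf end.
Definition ERle (a b : ERbar) : Prop :=
  match a, b with
  | Fin x, Fin y => x <= y
  | _, PInf => True
  | PInf, Fin _ => False
  end.
Definition ERlt (a b : ERbar) : Prop :=
  match a, b with
  | Fin x, Fin y => x < y
  | Fin _, PInf => True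
  | PInf, _ => False
  end.

Fixpoint ERsum1 (k : nat) (g : nat -> ERbar) : ERbar :=
  match k with O => Fin 0 | S k' => ERadd (ERsum1 k' g) (g (S k')) end.

(* f : R^n -> (-oo,+oo] is a genuine function of the first n coordinates *)
Definition respects (n : nat) {T : Type} (f : vec -> T) : Prop :=
  forall u v, veq n u v -> f u = f v.

Definition proper_fun (f : vec -> ERbar) : Prop := exists x, f x <> PInf.

Definition lsc (n : nat) (f : vec -> ERbar) : Prop :=
  forall x c, ERlt (Fin c) (f x) ->
    exists delta, 0 < delta /\
      forall y, norm n (vsub y x) < delta -> ERlt (Fin c) (f y).

Definition has_gradient (n : nat) (f : vec -> R) (g : vec) (x : vec) : Prop :=
  forall eps, 0 < eps -> exists delta, 0 < delta /\
    forall h, norm n h < delta ->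
      Rabs (f (vadd x h) - f x - inner n g h) <= eps * norm n h.

Definition bregman (n : nat) (w : vec -> R) (gw : vec -> vec) (z z' : vec) : R :=
  w z' - w z - inner n (gw z) (vsub z' z).

Definition in_D (n : nat) (Z : vec -> Prop) (m M : R) (w : vec -> R) (gw : vec -> vec) : Prop :=
  (forall z, Z z -> has_gradient n w (gw z) z) /\
  (forall z z', Z z -> Z z' -> bregman n w gw z z' >= m / 2 * (norm n (vsub z' z)) ^ 2) /\
  (forall z z', Z z -> Z z' -> norm n (vsub (gw z) (gw z')) <= M * norm n (vsub z z')).

Definition resid (p : nat) (n : nat -> nat) (A : nat -> mat) (b : vec) (x : nat -> vec) : vec :=
  fun r => sum1 p (fun i => mapply (n i) (A i) (x i) r) - b r.

Definition augL (d p : nat) (n : nat -> nat) (f : nat -> vec -> ERbar) (A : nat -> mat)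
  (b : vec) (beta : R) (x : nat -> vec) (lam : vec) : ERbar :=
  let r := resid p n A b x in
  ERadd (ERsum1 p (fun i => f i (x i)))
        (Fin (- inner d lam r + beta / 2 * (norm d r) ^ 2)).

Definition upd (x : nat -> vec) (i : nat) (u : vec) : nat -> vec :=
  fun j => if Nat.eqb j i then u else x j.

(* Main.v *)
Require Import Defs.
From Stdlib Require Import Reals Lra Lia Psatz FunctionalExtensionality.
Open Scope R_scope.


Lemma sumR_ext n f g : (forall j, (j < n)%nat -> f j = g j) -> sumR n f = sumR n g.
Proof. induction n; simpl; intros H; auto. rewrite IHn by (intros; apply H; lia). rewrite H by lia. reflexivity. Qed.

Lemma sumR_lin3 n a b c f g h :
  sumR n (fun j => a * f j + b * g j + c * h j) = a * sumR n f + b * sumR n g + c * sumR n h.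
Proof. induction n; simpl. ring. rewrite IHn. ring. Qed.

Lemma sumR_lin n a f : sumR n (fun j => a * f j) = a * sumR n f.
Proof. induction n; simpl. ring. rewrite IHn. ring. Qed.

Lemma sumR_add n f g : sumR n (fun j => f j + g j) = sumR n f + sumR n g.
Proof. induction n; simpl. ring. rewrite IHn. ring. Qed.

Lemma sumR_nonneg n f : (forall j, (j < n)%nat -> 0 <= f j) -> 0 <= sumR n f.
Proof. induction n; simpl; intros H. lra. assert (0 <= f n) by (apply H; lia).
  assert (0 <= sumR n f) by (apply IHn; intros; apply H; lia). lra. Qed.

Lemma sumR_zero n f : (forall j, (j < n)%nat -> f j = 0) -> sumR n f = 0.
Proof. intros H. rewrite (sumR_ext n f (fun _ => 0 * 1)). rewrite sumR_lin. ring.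
  intros; rewrite H; auto; ring. Qed.

Lemma inner_nonneg n u : 0 <= inner n u u.
Proof. apply sumR_nonneg; intros; nra. Qed.

Lemma norm_sq n u : norm n u ^ 2 = inner n u u.
Proof. unfold norm. simpl. rewrite Rmult_1_r. apply sqrt_sqrt, inner_nonneg. Qed.

Lemma norm_nonneg n u : 0 <= norm n u.
Proof. apply sqrt_pos. Qed.

Lemma inner_sym n u v : inner n u v = inner n v u.
Proof. apply sumR_ext; intros; ring. Qed.

Lemma inner_addr n u v w : inner n u (vadd v w) = inner n u v + inner n u w.
Proof. unfold inner, vadd. rewrite <- sumR_add. apply sumR_ext; intros; ring. Qed.

Lemma inner_zero_r n u v : (forall j, (j < n)%nat -> v j = 0) -> inner n u v = 0.
Proof. intros H; apply sumR_zero; intros j Hj; rewrite H; auto; ring. Qed.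

Lemma young n u v t : 0 < t -> 2 * inner n u v <= t * inner n u u + inner n v v / t.
Proof. intros Ht.
  assert (H := inner_nonneg n (fun j => t * u j - v j)).
  unfold inner in *.
  rewrite (sumR_ext n _ (fun j => (t*t) * (u j * u j) + (-2*t) * (u j * v j) + 1 * (v j * v j))) in H
    by (intros; ring).
  rewrite sumR_lin3 in H.
  set (a := sumR n (fun j => u j * u j)) in *.
  set (bb := sumR n (fun j => u j * v j)) in *.
  set (c := sumR n (fun j => v j * v j)) in *.
  apply Rmult_le_reg_l with t; auto.
  replace (t * (t * a + c / t)) with (t*t*a + c) by (field; lra). nra. Qed.

Lemma norm_scal n s y : 0 <= s -> norm n (vscal s y) = s * norm n y.
Proof. intros Hs. unfold norm.
  replace (inner n (vscal s y) (vscal s y)) with ((s*s) * inner n y y).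
  rewrite sqrt_mult_alt by nra. rewrite sqrt_square; auto.
  unfold inner, vscal. rewrite <- sumR_lin. apply sumR_ext; intros; ring. Qed.

Lemma mapply_scal n A s y : mapply n A (vscal s y) = vscal s (mapply n A y).
Proof. apply functional_extensionality; intro r. unfold mapply, vscal.
  rewrite <- sumR_lin. apply sumR_ext; intros; ring. Qed.

Lemma norm_zero n u : (forall j, (j < n)%nat -> u j = 0) -> norm n u = 0.
Proof. intros H. unfold norm. rewrite inner_zero_r; auto. apply sqrt_0. Qed.

Lemma opnorm_bound m n A a y : is_opnorm m n A a ->
  inner m (mapply n A y) (mapply n A y) <= a ^ 2 * inner n y y.
Proof. intros [Hub _].
  assert (Ha : 0 <= a).
  { apply Hub. exists vzero. split.
    - rewrite norm_zero; [lra| intros; reflexivity].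
    - rewrite norm_zero; auto. intros j _. unfold mapply, vzero. apply sumR_zero; intros; ring. }
  set (ny := norm n y). set (q := norm m (mapply n A y)).
  assert (Hny : 0 <= ny) by apply norm_nonneg.
  assert (Hq : 0 <= q) by apply norm_nonneg.
  assert (He : forall e, 0 < e -> q <= a * (ny + e)).
  { intros e He. set (s := / (ny + e)).
    assert (Hs : 0 < s) by (apply Rinv_0_lt_compat; lra).
    assert (s * q <= a).
    { apply Hub. exists (vscal s y). split.
      - rewrite norm_scal by lra. fold ny. unfold s.
        apply Rmult_le_reg_l with (ny + e); [lra|]. rewrite <- Rmult_assoc, Rinv_r by lra. nra.
      - rewrite mapply_scal, norm_scal by lra. reflexivity. }
    unfold s in H. apply Rmult_le_reg_l with (/ (ny + e)); auto.
    rewrite (Rmult_comm a), <- Rmult_assoc, Rinv_l by lra. lra. }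
  assert (Hqa : q <= a * ny).
  { destruct (Rle_or_lt q (a * ny)) as [h|h]; auto. exfalso.
    destruct (Req_dec a 0) as [h0|h0].
    - specialize (He 1 Rlt_0_1). subst. nra.
    - assert (0 < a) by lra.
      specialize (He ((q - a*ny)/(2*a))).
      assert (0 < (q - a*ny)/(2*a)) by (apply Rdiv_lt_0_compat; lra).
      specialize (He H0).
      replace (a * (ny + (q - a * ny) / (2 * a))) with (a * ny + (q - a*ny)/2) in He by (field; lra).
      lra. }
  rewrite <- !norm_sq. fold ny q. simpl. nra. Qed.

Lemma sum1_ext q g h : (forall j, (1 <= j <= q)%nat -> g j = h j) -> sum1 q g = sum1 q h.
Proof. induction q; simpl; intros H; auto. rewrite IHq by (intros; apply H; lia). rewrite H by lia. auto. Qed.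

Lemma sum1_add q g h : sum1 q (fun j => g j + h j) = sum1 q g + sum1 q h.
Proof. induction q; simpl. ring. rewrite IHq. ring. Qed.

Lemma sum1_lin q a g : sum1 q (fun j => a * g j) = a * sum1 q g.
Proof. induction q; simpl. ring. rewrite IHq. ring. Qed.

Lemma sum1_le q g h : (forall j, (1 <= j <= q)%nat -> g j <= h j) -> sum1 q g <= sum1 q h.
Proof. induction q; simpl; intros H. lra.
  assert (g (S q) <= h (S q)) by (apply H; lia).
  assert (sum1 q g <= sum1 q h) by (apply IHq; intros; apply H; lia). lra. Qed.

Lemma sum1_nonneg q g : (forall j, (1 <= j <= q)%nat -> 0 <= g j) -> 0 <= sum1 q g.
Proof. intros H. replace 0 with (sum1 q (fun _ => 0)). apply sum1_le; auto.
  induction q; simpl; auto. rewrite IHq. ring. intros; apply H; lia. Qed.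

Lemma sum1_upd q i g g' : (1 <= i <= q)%nat -> (forall j, j <> i -> g' j = g j) ->
  sum1 q g' = sum1 q g - g i + g' i.
Proof. induction q; intros Hi H. lia. simpl.
  destruct (Nat.eq_dec i (S q)) as [->|Hne].
  - rewrite (sum1_ext q g' g). ring. intros j Hj; apply H; lia.
  - rewrite IHq by first [lia | exact H]. rewrite (H (S q)) by lia. ring. Qed.

Lemma sum1_last q g : (1 <= q)%nat -> sum1 q g = sum1 (q - 1) g + g q.
Proof. intros. destruct q. lia. simpl. rewrite Nat.sub_0_r. auto. Qed.

Definition vsum1 (q : nat) (a : nat -> vec) : vec := fun r => sum1 q (fun i => a i r).

Lemma inner_vsum1_r n u q a : inner n u (vsum1 q a) = sum1 q (fun i => inner n u (a i)).
Proof. induction q; simpl.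
  - apply inner_zero_r. intros; reflexivity.
  - change (vsum1 (S q) a) with (vadd (vsum1 q a) (a (S q))). rewrite inner_addr, IHq. auto. Qed.

Lemma vsum1_cs n q a : inner n (vsum1 q a) (vsum1 q a) <= INR q * sum1 q (fun i => inner n (a i) (a i)).
Proof. induction q.
  - simpl. rewrite inner_zero_r. lra. intros; reflexivity.
  - change (vsum1 (S q) a) with (vadd (vsum1 q a) (a (S q))).
    set (S0 := vsum1 q a) in *. set (v := a (S q)).
    rewrite inner_addr, !(inner_sym n (vadd S0 v)), !inner_addr.
    rewrite (inner_sym n v S0).
    simpl sum1. fold v. rewrite S_INR.
    destruct q.
    + assert (E1 : inner n S0 v = 0) by (rewrite inner_sym; apply inner_zero_r; intros; reflexivity).
      assert (E2 : inner n S0 S0 = 0) by (apply inner_zero_r; intros; reflexivity).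
      rewrite E1, E2. simpl. lra.
    + assert (Hq : 0 < INR (S q)) by (apply lt_0_INR; lia).
      assert (Hy := young n S0 v (/ INR (S q)) ltac:(apply Rinv_0_lt_compat; auto)).
      unfold Rdiv in Hy. rewrite Rinv_inv in Hy.
      set (Sq := sum1 (S q) (fun i => inner n (a i) (a i))) in *.
      set (I0 := inner n S0 S0) in *. set (Iv := inner n v v). set (c := inner n S0 v) in *.
      assert (0 <= Iv) by apply inner_nonneg.
      assert (H2 : / INR (S q) * I0 <= Sq).
      { apply Rmult_le_reg_l with (INR (S q)); auto. rewrite <- Rmult_assoc, Rinv_r by lra. lra. }
      fold Iv in Hy. nra. Qed.

Lemma ERsum1_fin q g : (forall j, (1 <= j <= q)%nat -> g j <> PInf) ->
  ERsum1 q g = Fin (sum1 q (fun j => match g j with Fin r => r | PInf => 0 end)).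
Proof. induction q; simpl; intros H; auto. rewrite IHq by (intros; apply H; lia).
  assert (g (S q) <> PInf) by (apply H; lia). destruct (g (S q)); simpl; auto. congruence. Qed.

Lemma ERsum1_notinf q g : ERsum1 q g <> PInf -> forall j, (1 <= j <= q)%nat -> g j <> PInf.
Proof. induction q; simpl; intros H j Hj. lia.
  destruct (ERsum1 q g) eqn:E; destruct (g (S q)) eqn:E2; simpl in H; try congruence.
  destruct (Nat.eq_dec j (S q)). subst; congruence. apply IHq; [congruence|lia]. Qed.

Definition fin (e : ERbar) : R := match e with Fin r => r | PInf => 0 end.

Definition Qf d (beta : R) (lam r : vec) : R := - inner d lam r + beta / 2 * inner d r r.

Lemma augL_fin d p n f A b beta Z lam :
  (forall j, (1 <= j <= p)%nat -> f j (Z j) <> PInf) ->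
  augL d p n f A b beta Z lam =
  Fin (sum1 p (fun j => fin (f j (Z j))) + Qf d beta lam (resid p n A b Z)).
Proof. intros H. unfold augL. rewrite ERsum1_fin by auto. unfold Qf. rewrite norm_sq. reflexivity. Qed.

Lemma upd_same X i : upd X i (X i) = X.
Proof. apply functional_extensionality; intro j. unfold upd. destruct (Nat.eqb_spec j i); subst; auto. Qed.

Lemma mapply_sub n A u v : mapply n A (vsub u v) = vsub (mapply n A u) (mapply n A v).
Proof. apply functional_extensionality; intro r. unfold mapply, vsub.
  rewrite <- (Rmult_1_l (sumR n (fun c => A r c * v c))), <- (Rmult_1_l (sumR n (fun c => A r c * u c))).
  replace (1 * sumR n (fun c => A r c * u c) - 1 * sumR n (fun c => A r c * v c))
    with (1 * sumR n (fun c => A r c * u c) + (-1) * sumR n (fun c => A r c * v c) + 0 * sumR n (fun c => 0)) by ring.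
  rewrite <- sumR_lin3. apply sumR_ext; intros; ring. Qed.

Lemma resid_upd p n A b X i u : (1 <= i <= p)%nat ->
  resid p n A b (upd X i u) = vadd (resid p n A b X) (mapply (n i) (A i) (vsub u (X i))).
Proof. intros Hi. apply functional_extensionality; intro r. unfold resid, vadd.
  rewrite mapply_sub. unfold vsub.
  rewrite (sum1_upd p i (fun i0 => mapply (n i0) (A i0) (X i0) r)
             (fun i0 => mapply (n i0) (A i0) (upd X i u i0) r)); auto.
  - unfold upd. rewrite Nat.eqb_refl. ring.
  - intros j Hj. unfold upd. destruct (Nat.eqb_spec j i); [congruence|auto]. Qed.

Lemma resid_all p n A b X Y :
  resid p n A b Y = vadd (resid p n A b X) (vsum1 p (fun i => mapply (n i) (A i) (vsub (Y i) (X i)))).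
Proof. apply functional_extensionality; intro r. unfold resid, vadd, vsum1.
  rewrite (sum1_ext p (fun i => mapply (n i) (A i) (vsub (Y i) (X i)) r)
     (fun i => mapply (n i) (A i) (Y i) r + (-1) * mapply (n i) (A i) (X i) r)).
  rewrite sum1_add, sum1_lin. ring.
  intros j _. rewrite mapply_sub. unfold vsub. ring. Qed.

Lemma inner_addl n u v w : inner n (vadd u v) w = inner n u w + inner n v w.
Proof. rewrite !(inner_sym n _ w). apply inner_addr. Qed.

Lemma Qf_add d beta lam r v :
  Qf d beta lam (vadd r v) - Qf d beta lam r =
  - inner d lam v + beta * inner d r v + beta / 2 * inner d v v.
Proof. unfold Qf. rewrite !inner_addr, !inner_addl, (inner_sym d v r). field. Qed.

Lemma quad_ident d beta lam r0 p a :
  Qf d beta lam (vadd r0 (vsum1 p a)) - Qf d beta lam r0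
  - sum1 p (fun i => Qf d beta lam (vadd r0 (a i)) - Qf d beta lam r0)
  = beta / 2 * (inner d (vsum1 p a) (vsum1 p a) - sum1 p (fun i => inner d (a i) (a i))).
Proof. rewrite Qf_add. rewrite (sum1_ext p _ (fun i => (- inner d lam (a i) + beta * inner d r0 (a i)) + beta/2 * inner d (a i) (a i))).
  rewrite sum1_add, sum1_lin, !inner_vsum1_r.
  rewrite (sum1_ext p (fun i => - inner d lam (a i) + beta * inner d r0 (a i)) (fun i => (-1) * inner d lam (a i) + beta * inner d r0 (a i))) by (intros; ring).
  rewrite sum1_add, !sum1_lin. ring.
  intros; rewrite Qf_add; ring. Qed.

Lemma cs_split n q a v alpha : (1 <= q)%nat -> 0 < alpha ->
  inner n (vadd (vsum1 q a) v) (vadd (vsum1 q a) v)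
  - (sum1 q (fun i => inner n (a i) (a i)) + inner n v v)
  <= (INR q - 1 + alpha) * sum1 q (fun i => inner n (a i) (a i)) + INR q / alpha * inner n v v.
Proof. intros Hq Ha.
  set (S0 := vsum1 q a).
  rewrite !inner_addr, !inner_addl, (inner_sym n v S0).
  assert (Hcs := vsum1_cs n q a). fold S0 in Hcs.
  assert (HQ : 1 <= INR q) by (apply (le_INR 1); lia).
  assert (Hy := young n S0 v (alpha / INR q) ltac:(apply Rdiv_lt_0_compat; lra)).
  replace (inner n v v / (alpha / INR q)) with (INR q / alpha * inner n v v) in Hy by (field; lra).
  set (Sq := sum1 q (fun i => inner n (a i) (a i))) in *.
  assert (alpha / INR q * inner n S0 S0 <= alpha * Sq).
  { unfold Rdiv. rewrite Rmult_assoc. apply Rmult_le_compat_l; [lra|].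
    apply Rmult_le_reg_l with (INR q); [lra|]. rewrite <- Rmult_assoc, Rinv_r by lra. lra. }
  lra. Qed.

Lemma sum1_sub q g h : sum1 q (fun j => g j - h j) = sum1 q g - sum1 q h.
Proof. induction q; simpl. ring. rewrite IHq. ring. Qed.

Theorem mainTheorem5
  (p d : nat) (n : nat -> nat)
  (f : nat -> vec -> ERbar) (fp : vec -> R) (gfp : vec -> vec) (Lp : R)
  (A : nat -> mat) (b : vec)
  (nA : nat -> R) (nApt : R) (sig : R)
  (betabar alpha beta theta : R) (m M : nat -> R)
  (w : nat -> nat -> vec -> R) (gw : nat -> nat -> vec -> vec)
  (x : nat -> nat -> vec) (lam : nat -> vec) :
  let P := INR p in
  let gam := theta / (1 - Rabs (theta - 1)) ^ 2 in
  let c1 := 2 * Rabs (theta - 1) / (beta * theta * (1 - Rabs (theta - 1)) * sig) in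
  let Rp0 := vsub (mtapply d (A p) (lam 0%nat)) (gfp (x 0%nat p)) in
  let dx := fun (k i : nat) =>
    match k with
    | O => if Nat.eqb i p then vscal (1 / M p) Rp0 else vzero
    | S k' => vsub (x k i) (x k' i)
    end in
  let dlam := fun k : nat =>
    match k with O => vzero | S k' => vsub (lam k) (lam k') end in
  let eta := fun k : nat =>
    match k with
    | O => m p / (4 * (M p) ^ 2) * (norm (n p) Rp0) ^ 2
    | S _ => sum1 p (fun i => m i / 4 * (norm (n i) (dx k i)) ^ 2)
             + c1 / 2 * (norm (n p) (mtapply d (A p) (dlam k))) ^ 2
    end in
  let Lhat := fun k : nat =>
    ERadd (augL d p n f A b beta (x k) (lam k)) (Fin (eta k)) in
  let Theta_lam := fun k : nat =>
    1 / (beta * theta) * (norm d (dlam k)) ^ 2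
    + c1 / 2 * ((norm (n p) (mtapply d (A p) (dlam k))) ^ 2
                - (norm (n p) (mtapply d (A p) (dlam (k - 1)%nat))) ^ 2) in
  let Theta_p := fun k : nat =>
    ((P - 1) * beta * (nA p) ^ 2 / (2 * alpha) - m p / 4)
    * ((norm (n p) (dx k p)) ^ 2 + (norm (n p) (dx (k - 1)%nat p)) ^ 2) in
  (* p >= 2 *)
  (2 <= p)%nat ->
  (* each f_i is a function on R^{n_i} *)
  (forall i, (1 <= i <= p)%nat -> respects (n i) (f i)) ->
  (* (A0) *)
  (forall i, (1 <= i <= p - 1)%nat -> proper_fun (f i) /\ lsc (n i) (f i)) ->
  (* (A1) *)
  (exists r c, (r < d)%nat /\ (c < n p)%nat /\ A p r c <> 0) ->
  (exists z, veq d (mapply (n p) (A p) z) b) ->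
  (forall i, (1 <= i <= p - 1)%nat -> forall y,
      exists z, veq d (mapply (n p) (A p) z) (mapply (n i) (A i) y)) ->
  (* (A2) *)
  (forall z, f p z = Fin (fp z)) ->
  (forall z, has_gradient (n p) fp (gfp z) z) ->
  (forall z z', norm (n p) (vsub (gfp z) (gfp z')) <= Lp * norm (n p) (vsub z z')) ->
  (* (A3) *)
  0 <= betabar ->
  (exists c, forall xx : nat -> vec,
      ERle (Fin c) (ERadd (ERsum1 p (fun i => f i (xx i)))
                          (Fin (betabar / 2 * (norm d (resid p n A b xx)) ^ 2)))) ->
  (* norms and sigma^+_{A_p} *)
  (forall i, (1 <= i <= p)%nat -> is_opnorm d (n i) (A i) (nA i)) ->
  is_opnorm (n p) d (transpose (A p)) nApt ->
  is_min_pos_eig (n p) (mtm d (A p)) sig ->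
  (* parameters *)
  (forall i, (1 <= i <= p)%nat -> f i (x 0%nat i) <> PInf) ->
  0 < alpha -> betabar <= beta -> 0 < beta ->
  (forall i, (1 <= i <= p)%nat -> 0 < m i <= M i) ->
  0 < theta < 2 ->
  (forall i, (1 <= i <= p - 1)%nat ->
     m i / 4 - ((P - 2 + alpha) / 2 + 2 * gam * (P + 1) / sig * nApt ^ 2)
               * beta * max1 (p - 1) (fun l => (nA l) ^ 2) > 0) ->
  m p / 4 - (beta * (P - 1) * (nA p) ^ 2 / (2 * alpha)
             + gam * (P + 1) * (Lp ^ 2 + 2 * (M p) ^ 2) / (beta * sig)) > 0 ->
  (* the NEPJ-ADMM iterations *)
  (forall k i, (1 <= k)%nat -> (1 <= i <= p)%nat ->
     respects (n i) (w k i) /\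
     in_D (n i) (fun z => f i z <> PInf) (m i) (M i) (w k i) (gw k i) /\
     (forall u,
        ERle (ERadd (augL d p n f A b beta (upd (x (k - 1)%nat) i (x k i)) (lam (k - 1)%nat))
                    (Fin (bregman (n i) (w k i) (gw k i) (x (k - 1)%nat i) (x k i))))
             (ERadd (augL d p n f A b beta (upd (x (k - 1)%nat) i u) (lam (k - 1)%nat))
                    (Fin (bregman (n i) (w k i) (gw k i) (x (k - 1)%nat i) u))))) ->
  (forall k, (1 <= k)%nat ->
     veq d (lam k) (fun r => lam (k - 1)%nat r
                             - theta * beta * resid p n A b (x k) r)) ->
  (* conclusion *)
  forall k, (1 <= k)%nat ->
    exists a a', Lhat k = Fin a /\ Lhat (k - 1)%nat = Fin a' /\
      a - a' <= sum1 (p - 1) (fun i =>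
                   ((P - 2 + alpha) * beta * (nA i) ^ 2 / 2 - m i / 4)
                   * (norm (n i) (dx k i)) ^ 2)
                + Theta_lam k + Theta_p k.
Proof.
  intros P gam c1 Rp0 dx dlam eta Lhat Theta_lam Theta_p Hp Hresp HA0 HA1a HA1b HA1c
    Hfp Hgrad HLip Hbb HA3 HnA HnApt Hsig Hfin0 Halpha Hbb2 Hbeta Hm Htheta Hdi Hdp Hiter Hlam k Hk.
  assert (Hfin : forall k i, (1 <= i <= p)%nat -> f i (x k i) <> PInf).
  { induction k0 as [|k0 IH]; intros i Hi; auto.
    destruct (Hiter (S k0) i ltac:(lia) Hi) as [_ [_ Hopt]].
    specialize (Hopt (x k0 i)). rewrite Nat.sub_succ, Nat.sub_0_r in Hopt.
    rewrite upd_same in Hopt. rewrite (augL_fin d p n f A b beta (x k0)) in Hopt by auto.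
    intro E.
    destruct (augL d p n f A b beta (upd (x k0) i (x (S k0) i)) (lam k0)) eqn:E2; [|exact Hopt].
    unfold augL in E2.
    assert (ERsum1 p (fun i0 => f i0 (upd (x k0) i (x (S k0) i) i0)) <> PInf).
    { intro E3. rewrite E3 in E2. discriminate. }
    apply (ERsum1_notinf _ _ H i Hi). unfold upd. rewrite Nat.eqb_refl. exact E. }

  destruct k as [|k']; [lia|].
  replace (S k' - 1)%nat with k' by lia.
  set (X := x k') in *. set (Y := x (S k')) in *.
  set (a := fun i => mapply (n i) (A i) (vsub (Y i) (X i))).
  set (r0 := resid p n A b X). set (r1 := resid p n A b Y).
  set (FX := fun j => fin (f j (X j))). set (FY := fun j => fin (f j (Y j))).
  set (Dn := fun i => norm (n i) (vsub (Y i) (X i)) ^ 2).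
  assert (HFX : forall j, (1 <= j <= p)%nat -> f j (X j) <> PInf) by (intros; apply Hfin; auto).
  assert (HFY : forall j, (1 <= j <= p)%nat -> f j (Y j) <> PInf) by (intros; apply Hfin; auto).
  assert (HB : forall i, (1 <= i <= p)%nat ->
     FY i - FX i + Qf d beta (lam k') (vadd r0 (a i)) + m i / 2 * Dn i <= Qf d beta (lam k') r0).
  { intros i Hi.
    destruct (Hiter (S k') i ltac:(lia) Hi) as [_ [[_ [HD _]] Hopt]].
    specialize (Hopt (X i)). rewrite Nat.sub_succ, Nat.sub_0_r in Hopt. fold X Y in Hopt.
    rewrite upd_same in Hopt. rewrite (augL_fin d p n f A b beta X) in Hopt by auto.
    rewrite augL_fin in Hopt.
    2:{ intros j Hj. unfold upd. destruct (Nat.eqb_spec j i); subst; auto. }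
    rewrite resid_upd in Hopt by auto.
    assert (Hbz : bregman (n i) (w (S k') i) (gw (S k') i) (X i) (X i) = 0).
    { unfold bregman. rewrite inner_zero_r. ring. intros j _. unfold vsub. ring. }
    rewrite Hbz in Hopt. simpl in Hopt.
    rewrite (sum1_upd p i (fun j => fin (f j (X j)))) in Hopt; auto.
    2:{ intros j Hj. unfold upd. destruct (Nat.eqb_spec j i); [congruence|auto]. }
    unfold upd in Hopt. rewrite Nat.eqb_refl in Hopt.
    specialize (HD (X i) (Y i) (HFX i Hi) (HFY i Hi)).
    unfold FX, FY, Dn, a, r0. lra. }
  assert (HpS : (1 <= p)%nat) by lia.
  assert (HP2 : 2 <= P) by (unfold P; apply (le_INR 2); lia).
  assert (HPq : INR (p - 1) = P - 1) by (unfold P; rewrite minus_INR by lia; simpl; ring).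
  assert (HS : sum1 p (fun i => FY i - FX i + m i / 2 * Dn i)
               <= sum1 p (fun i => Qf d beta (lam k') r0 - Qf d beta (lam k') (vadd r0 (a i)))).
  { apply sum1_le. intros i Hi. specialize (HB i Hi). lra. }
  rewrite sum1_add, sum1_sub in HS.
  assert (HId := quad_ident d beta (lam k') r0 p a).
  assert (Hr1 : r1 = vadd r0 (vsum1 p a)) by apply resid_all.
  rewrite <- Hr1 in HId.
  rewrite (sum1_ext p (fun i => Qf d beta (lam k') (vadd r0 (a i)) - Qf d beta (lam k') r0)
     (fun i => (-1) * (Qf d beta (lam k') r0 - Qf d beta (lam k') (vadd r0 (a i))))) in HId
     by (intros; ring).
  rewrite sum1_lin in HId.
  assert (Hvs : vsum1 p a = vadd (vsum1 (p - 1) a) (a p)).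
  { destruct p as [|q]; [lia|]. simpl. rewrite Nat.sub_0_r. reflexivity. }
  assert (HCS := cs_split d (p - 1) a (a p) alpha ltac:(lia) Halpha).
  rewrite <- Hvs, HPq in HCS.
  rewrite (sum1_last p (fun i => inner d (a i) (a i))) in HId by lia.
  assert (HOp : forall i, (1 <= i <= p)%nat -> inner d (a i) (a i) <= nA i ^ 2 * Dn i).
  { intros i Hi. unfold a, Dn. rewrite norm_sq. apply opnorm_bound. apply HnA; auto. }
  assert (HOps : sum1 (p - 1) (fun i => inner d (a i) (a i)) <= sum1 (p - 1) (fun i => nA i ^ 2 * Dn i)).
  { apply sum1_le. intros; apply HOp; lia. }
  assert (HOpp := HOp p ltac:(lia)).
  assert (HL := Hlam (S k') ltac:(lia)). rewrite Nat.sub_succ, Nat.sub_0_r in HL. fold Y in HL. fold r1 in HL.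
  assert (HD1 : Qf d beta (lam (S k')) r1 - Qf d beta (lam k') r1 = theta * beta * inner d r1 r1).
  { unfold Qf, inner.
    rewrite (sumR_ext d (fun j => lam (S k') j * r1 j) (fun j => lam k' j * r1 j - theta * beta * (r1 j * r1 j))).
    rewrite (sumR_ext d (fun j => lam k' j * r1 j - theta * beta * (r1 j * r1 j))
       (fun j => 1 * (lam k' j * r1 j) + (- (theta*beta)) * (r1 j * r1 j) + 0 * 0)) by (intros; ring).
    rewrite sumR_lin3. lra.
    intros j Hj. rewrite HL by auto. ring. }
  assert (HD2 : norm d (dlam (S k')) ^ 2 = (theta * beta) ^ 2 * inner d r1 r1).
  { rewrite norm_sq. change (dlam (S k')) with (vsub (lam (S k')) (lam k')). unfold inner.
    rewrite <- sumR_lin. apply sumR_ext. intros j Hj. unfold vsub. rewrite HL by auto. ring. }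
  assert (HE1 : eta (S k') = sum1 p (fun i => m i / 4 * Dn i)
                + c1 / 2 * norm (n p) (mtapply d (A p) (dlam (S k'))) ^ 2) by reflexivity.
  assert (HE0 : eta k' >= m p / 4 * norm (n p) (dx k' p) ^ 2
                + c1 / 2 * norm (n p) (mtapply d (A p) (dlam k')) ^ 2).
  { destruct k' as [|k''].
    - assert (Hz : norm (n p) (mtapply d (A p) (dlam 0%nat)) = 0).
      { apply norm_zero. intros j _. unfold mtapply, mapply, dlam, vzero. apply sumR_zero; intros; ring. }
      rewrite Hz. unfold dx. rewrite Nat.eqb_refl.
      destruct (Hm p ltac:(lia)) as [Hm1 Hm2].
      rewrite norm_scal by (apply Rlt_le, Rdiv_lt_0_compat; lra).
      unfold eta. apply Req_ge. field. lra.
    - change (eta (S k'')) with (sum1 p (fun i => m i / 4 * (norm (n i) (dx (S k'') i)) ^ 2)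
             + c1 / 2 * (norm (n p) (mtapply d (A p) (dlam (S k'')))) ^ 2).
      rewrite sum1_last by lia.
      assert (0 <= sum1 (p - 1) (fun i => m i / 4 * (norm (n i) (dx (S k'') i)) ^ 2)).
      { apply sum1_nonneg. intros i Hi. destruct (Hm i ltac:(lia)).
        assert (0 <= norm (n i) (dx (S k'') i)) by apply norm_nonneg. apply Rmult_le_pos; [lra|]. apply pow_le; lra. }
      lra. }
  exists (sum1 p FY + Qf d beta (lam (S k')) r1 + eta (S k')),
         (sum1 p FX + Qf d beta (lam k') r0 + eta k').
  split; [|split].
  { unfold Lhat. rewrite augL_fin by auto. reflexivity. }
  { unfold Lhat. rewrite augL_fin by auto. reflexivity. }
  unfold Theta_lam, Theta_p. replace (S k' - 1)%nat with k' by lia.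
  change (norm (n p) (dx (S k') p) ^ 2) with (Dn p).
  rewrite HE1, HD2.
  rewrite (sum1_ext (p - 1) _ (fun i => ((P - 2 + alpha) * beta / 2) * (nA i ^ 2 * Dn i) + (- (1/4)) * (m i * Dn i)))
    by (intros; unfold Dn, dx; cbv beta iota; unfold X, Y; field).
  rewrite sum1_add, !sum1_lin.
  rewrite (sum1_ext p (fun i => m i / 4 * Dn i) (fun i => (1/4) * (m i * Dn i))) by (intros; field).
  rewrite (sum1_ext p (fun i => m i / 2 * Dn i) (fun i => (1/2) * (m i * Dn i))) in HS by (intros; field).
  rewrite !sum1_lin in HS |- *.
  rewrite !(sum1_last p (fun j => m j * Dn j)) in HS |- * by lia.
  set (SI := sum1 (p - 1) (fun i => inner d (a i) (a i))) in *.
  set (SN := sum1 (p - 1) (fun i => nA i ^ 2 * Dn i)) in *.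
  set (SM := sum1 (p - 1) (fun i => m i * Dn i)) in *.
  set (IS := inner d (vsum1 p a) (vsum1 p a)) in *.
  set (Iap := inner d (a p) (a p)) in *.
  assert (Hc1 : beta / 2 * (IS - (SI + Iap)) <= beta / 2 * ((P - 1 - 1 + alpha) * SI + (P - 1) / alpha * Iap))
    by (apply Rmult_le_compat_l; lra).
  assert (Hc2 : (P - 1 - 1 + alpha) * SI <= (P - 1 - 1 + alpha) * SN) by (apply Rmult_le_compat_l; lra).
  assert (Hc3 : (P - 1) / alpha * Iap <= (P - 1) / alpha * (nA p ^ 2 * Dn p)).
  { apply Rmult_le_compat_l; auto. unfold Rdiv; apply Rmult_le_pos; [lra| apply Rlt_le, Rinv_0_lt_compat; lra]. }
  assert (Hc4 : 0 <= (P - 1) * beta * nA p ^ 2 / (2 * alpha) * norm (n p) (dx k' p) ^ 2).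
  { apply Rmult_le_pos. unfold Rdiv; apply Rmult_le_pos; [| apply Rlt_le, Rinv_0_lt_compat; lra]. apply Rmult_le_pos; [|apply pow2_ge_0]. nra. apply pow2_ge_0. }
  assert (Hinv : 1 / (beta * theta) * ((theta * beta) ^ 2 * inner d r1 r1) = theta * beta * inner d r1 r1)
    by (field; lra).
  rewrite Hinv.
  replace ((P - 1) * beta * nA p ^ 2 / (2 * alpha)) with (beta / 2 * ((P - 1) / alpha * nA p ^ 2)) in * by (field; lra).
  assert (Hc12 : beta / 2 * ((P - 1 - 1 + alpha) * SI + (P - 1) / alpha * Iap)
     <= beta / 2 * ((P - 1 - 1 + alpha) * SN + (P - 1) / alpha * (nA p ^ 2 * Dn p)))
    by (apply Rmult_le_compat_l; lra).
  lra.
Qed.
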